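(* For every $r\geq 1$ there exists a polynomial $p_r$ of degree at most $2r-2$ such that for all $k\geq 3$, $$M(k;r)\leq \frac{k^{2r-1}}{(2r-1)!}+p_r(k).$$
   Context: A sequence of positive integers $w_1<\dots<w_n$ is an ascending wave if $w_{i+1}-w_i \geq w_i-w_{i-1}$ for $2\le i\le n-1$. $AW(k;r)$ is the least $N$ such that every $r$-coloring of $\{1,\dots,N\}$ contains a $k$-term monochromatic ascending wave. For $k\ge 2$ and $M\ge AW(k;r)$: for an $r$-coloring $\psi$ of $\{1,\dots,M\}$, $\delta_k(\psi)$ is the minimum of $w_k-w_{k-1}$ over all monochromatic $k$-term ascending waves $(w_1,\dots,w_k)$ under $\psi$, and $\Delta^M(k;r)$ is the maximum of $\delta_k(\psi)$ over all $r$-colorings $\psi$ of $\{1,\dots,M\}$. The integers $M(k;r)$ are defined by $M(k;1)=k$, $M(1;r)=1$, $M(2;r)=r+1$, and for $k\ge3$, $r\ge2$, $M(k;r)=M(k-1;r)+\Delta^{M(k-1;r)}(k-1;r)+M(k;r-1)-1$; one has $M(k;r)\ge AW(k;r)$ so these quantities are defined. *)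

(* Defs.v *)
From mathcomp Require Import all_boot all_order all_algebra.
Set Implicit Arguments. Unset Strict Implicit. Unset Printing Implicit Defensive.

(* A sequence of integers w_1 < ... < w_n is an ascending wave if
   w_{i+1} - w_i >= w_i - w_{i-1} for 2 <= i <= n-1 (0-indexed below). *)
Definition ascending_wave (s : seq nat) : bool :=
  sorted ltn s &&
  [forall i : 'I_(size s),
     (1 <= i)%N && (i.+1 < size s)%N ==>
     (nth 0 s i - nth 0 s i.-1 <= nth 0 s i.+1 - nth 0 s i)%N].

(* An r-coloring of {1,...,M}: the element x : 'I_M stands for the integer x+1. *)
Definition coloring (M r : nat) := {ffun 'I_M -> 'I_r}.

Definition wave_of M (t : seq 'I_M) : seq nat := [seq (val x).+1 | x <- t].

Definition mono_wave M r (psi : coloring M r) k (t : k.-tuple 'I_M) : bool :=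
  ascending_wave (wave_of t) &&
  [forall i : 'I_k, forall j : 'I_k, psi (tnth t i) == psi (tnth t j)].

Definition last_gap M k (t : k.-tuple 'I_M) : nat :=
  (nth 0 (wave_of t) k.-1 - nth 0 (wave_of t) k.-2)%N.

(* The default value M is only returned when there is no such wave,
   which never happens for M >= AW(k;r) (the only case where it is used). *)
Definition delta_k k M r (psi : coloring M r) : nat :=
  \big[minn/M]_(t : k.-tuple 'I_M | mono_wave psi t) last_gap t.

Definition Delta M k r : nat :=
  \max_(psi : coloring M r) delta_k k psi.

Fixpoint Mkr (k : nat) : nat -> nat :=
  match k with
  | 0 => fun _ => 0
  | 1 => fun _ => 1
  | 2 => fun r => r.+1
  | (k'.+1) as k0 =>
      fix Mr (r : nat) : nat :=
        match r with
        | 0 => 0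
        | 1 => k0
        | r'.+1 => (Mkr k' r + Delta (Mkr k' r) k' r + Mr r' - 1)%N
        end
  end.

(* Main.v *)
Require Import Defs.
From mathcomp Require Import all_boot all_order all_algebra.
From mathcomp Require Import zify ring.


Lemma awP s : ascending_wave s <-> sorted ltn s /\
  (forall i, 0 < i -> i.+1 < size s ->
     nth 0 s i - nth 0 s i.-1 <= nth 0 s i.+1 - nth 0 s i).
Proof.
rewrite /ascending_wave; split.
- case/andP => H1 /forallP H2; split=>// i Hi Hs.
  by have := H2 (Ordinal (ltnW Hs)); rewrite /= Hi Hs => /implyP; apply.
- case=> H1 H2; apply/andP; split=>//; apply/forallP=> i.
  by apply/implyP=> /andP[Hi Hs]; apply: H2.
Qed.

Lemma awD c s : ascending_wave (map (addn c) s) <-> ascending_wave s.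
Proof.
rewrite !awP size_map.
have -> : sorted ltn (map (addn c) s) = sorted ltn s.
  by apply: mono_sorted => x y /=; rewrite ltn_add2l.
split; case=> H1 H2; split=> // i Hi Hs; have := H2 i Hi Hs;
  rewrite !(nth_map 0) //; try lia.
Qed.

Definition lg (s : seq nat) := nth 0 s (size s).-1 - nth 0 s (size s).-2.

Lemma lgD c s : lg (map (addn c) s) = lg s.
Proof.
rewrite /lg size_map; case: s => [|x s] //=.
rewrite -map_cons !(nth_map 0) //=; [lia|lia].
Qed.

Lemma aw_rcons s x : ascending_wave s -> last 0 s < x -> 0 < size s ->
  lg s <= x - last 0 s -> ascending_wave (rcons s x).
Proof.
move=> /awP [H1 H2] Hx Hs Hg; apply/awP; rewrite size_rcons; split.
- case: s H1 Hx Hs {H2 Hg} => [|y s] //= H1 Hx _.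
  by rewrite rcons_path H1 /=.
- move=> i Hi Hi2; rewrite !nth_rcons.
  have E: forall j, j < size s -> nth 0 (rcons s x) j = nth 0 s j.
    by move=> j Hj; rewrite nth_rcons Hj.
  have Hm : i.-1 < size s by lia.
  rewrite Hm.
  case: (ltngtP i.+1 (size s)) => Hc.
  + have := H2 i Hi Hc; lia.
  + lia.
  + have Hl: last 0 s = nth 0 s i by rewrite (last_nth 0) -Hc /= .
    move: Hg; rewrite /lg -Hc /= Hl.
    case: i Hi Hi2 Hc Hl Hm => // i _ _ Hc Hl Hm /=; lia.
Qed.

Definition monoc (f : nat -> nat) (s : seq nat) :=
  forall x y, x \in s -> y \in s -> f x = f y.

Definition Good k r L := forall (f : nat -> nat) a,
  (forall x, a <= x < a + L -> f x < r) ->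
  exists s, [/\ size s = k, ascending_wave s,
                all (fun x => a <= x < a + L) s & monoc f s].

Definition GoodB k r L B := forall (f : nat -> nat) a,
  (forall x, a <= x < a + L -> f x < r) ->
  exists s, [/\ size s = k, ascending_wave s,
                all (fun x => a <= x < a + L) s, monoc f s & lg s <= B].

Lemma good1 r : Good 1 r 1.
Proof.
move=> f a Hf; exists [:: a]; split=> //.
- by apply/awP; split=> // -[|i].
- by rewrite /= leqnn addn1 ltnSn.
- by move=> x y; rewrite !inE => /eqP-> /eqP->.
Qed.

Lemma goodk1 k : Good k 1 k.
Proof.
move=> f a Hf; exists (iota a k); split.
- by rewrite size_iota.
- apply/awP; split; first exact: iota_ltn_sorted.
  move=> i Hi; rewrite size_iota => Hk.
  rewrite !nth_iota; lia.
- by apply/allP=> x; rewrite mem_iota.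
- move=> x y; rewrite !mem_iota => Hx Hy; have := Hf x Hx; have := Hf y Hy; lia.
Qed.

Lemma good2 r : Good 2 r r.+1.
Proof.
move=> f a Hf.
set v := map f (iota a r.+1).
have : ~~ uniq v.
  apply/negP=> Hu.
  have H : size v <= size (iota 0 r).
    apply: uniq_leq_size Hu _.
    move=> y /mapP [x]; rewrite mem_iota => Hx ->.
    by rewrite mem_iota add0n; apply: Hf.
  by move: H; rewrite size_map !size_iota ltnn.
case/(uniqPn 0) => i [j [Hij]]; rewrite size_map size_iota => Hj.
rewrite !(nth_map 0) ?size_iota ?nth_iota; try lia.
move=> E; exists [:: a + i; a + j]; split=> //.
- apply/awP; split; first by rewrite /= ltn_add2l Hij.
  by move=> [|[|k]].
- rewrite /= !andbT; apply/andP; split; lia.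
- move=> x y; rewrite !inE => /orP[]/eqP-> /orP[]/eqP-> //.
Qed.

Lemma wave_ofE M (t : seq 'I_M) : wave_of t = map (addn 1) (map val t).
Proof. by rewrite /wave_of -map_comp; apply: eq_map => x /=; rewrite add1n. Qed.

Lemma nth_wave_le M (t : seq 'I_M) j : nth 0 (wave_of t) j <= M.
Proof.
case: (ltnP j (size (wave_of t))) => Hj; last by rewrite nth_default.
have /mapP [x _ ->] := mem_nth 0 Hj; exact: ltn_ord.
Qed.

Lemma last_gap_le M k (t : k.-tuple 'I_M) : last_gap t <= M.
Proof. by rewrite /last_gap; apply: leq_trans (leq_subr _ _) _; apply: nth_wave_le. Qed.

Lemma delta_le k M r (psi : coloring M r) (t : k.-tuple 'I_M) :
  mono_wave psi t -> delta_k k psi <= last_gap t.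
Proof.
move=> H; rewrite /delta_k; have : t \in index_enum (k.-tuple 'I_M) by rewrite mem_index_enum.
elim: (index_enum _) => // y s IH; rewrite inE big_cons => /orP[/eqP<-|Hx].
  by rewrite H geq_minl.
case: (mono_wave psi y); last exact: IH.
exact: leq_trans (geq_minr _ _) (IH Hx).
Qed.

Lemma attain k M r (psi : coloring M r) (t0 : k.-tuple 'I_M) : mono_wave psi t0 ->
  exists t : k.-tuple 'I_M, mono_wave psi t /\ last_gap t <= delta_k k psi.
Proof.
move=> H0; case: (arg_minnP (fun t : k.-tuple 'I_M => last_gap t) H0) => t Ht Hmin.
exists t; split=> //; rewrite /delta_k.
elim/big_ind: _ => //; first exact: last_gap_le.
by move=> x y Hx Hy; rewrite leq_min Hx Hy.
Qed.

Lemma lg_wave M k (t : k.-tuple 'I_M) : last_gap t = lg (wave_of t).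
Proof. by rewrite /last_gap /lg /wave_of size_map size_tuple. Qed.

Section Conv.
Variables (k M r : nat) (psi : coloring M r) (f : nat -> nat) (a : nat).
Hypothesis Hrel : forall i : 'I_M, val (psi i) = f (a + i).

Lemma tuple_to_seq (t : k.-tuple 'I_M) : mono_wave psi t ->
  exists s, [/\ size s = k, ascending_wave s,
     all (fun x => a <= x < a + M) s, monoc f s & lg s = last_gap t].
Proof.
case/andP=> Haw /forallP Hm.
have Es : map (fun i : 'I_M => a + val i) t = map (addn a) (map val t)
  by rewrite -map_comp.
exists (map (fun i : 'I_M => a + val i) t); rewrite Es; split.
- by rewrite !size_map size_tuple.
- by apply/awD; apply/(awD 1); rewrite -wave_ofE.
- apply/allP=> x /mapP [y /mapP [i _ ->] ->]; rewrite leq_addr ltn_add2l; exact: ltn_ord.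
- move=> x y /mapP [x' /mapP [i Hi ->] ->] /mapP [y' /mapP [j Hj ->] ->].
  rewrite -!Hrel; case/tnthP: Hi => i' ->; case/tnthP: Hj => j' ->.
  by have /forallP/(_ j')/eqP -> := Hm i'.
- by rewrite lg_wave wave_ofE !lgD.
Qed.
End Conv.


Lemma seq_to_tuple k M' r (psi : coloring M'.+1 r) (f : nat -> nat) a
  (Hrel : forall i : 'I_M'.+1, val (psi i) = f (a + i)) s :
  size s = k -> ascending_wave s -> all (fun x => a <= x < a + M'.+1) s ->
  monoc f s -> exists t : k.-tuple 'I_M'.+1, mono_wave psi t /\ last_gap t = lg s.
Proof.
move=> Hsz Haw /allP Hall Hm.
set s' := map (fun x => inord (x - a) : 'I_M'.+1) s.
have Hv : map val s' = map (subn^~ a) s.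
  rewrite -map_comp; apply/eq_in_map => x Hx /=; rewrite inordK //.
  have := Hall x Hx; lia.
have Hs : s = map (addn a) (map (subn^~ a) s).
  rewrite -map_comp; rewrite -{1}(map_id s); apply/eq_in_map => x Hx /=.
  have := Hall x Hx; lia.
have Hsz' : size s' == k by rewrite size_map Hsz.
exists (Tuple Hsz'); split.
- apply/andP; split.
  + rewrite wave_ofE /= Hv; apply/(awD 1); apply/(awD a); rewrite -Hs //.
  + apply/forallP=> i; apply/forallP=> j; apply/eqP; apply: val_inj.
    rewrite !Hrel.
    have /mapP [x Hx ->] : tnth (Tuple Hsz') i \in s' by apply: mem_tnth.
    have /mapP [y Hy ->] : tnth (Tuple Hsz') j \in s' by apply: mem_tnth.
    rewrite !inordK; try (have := Hall x Hx; have := Hall y Hy; lia).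
    have -> : a + (x - a) = x by have := Hall x Hx; lia.
    have -> : a + (y - a) = y by have := Hall y Hy; lia.
    exact: Hm.
- by rewrite lg_wave wave_ofE lgD /= Hv {2}Hs lgD.
Qed.

Lemma fromDelta k r M : 0 < M -> Good k r M -> forall f a,
  (forall x, a <= x < a + M -> f x < r) ->
  exists s, [/\ size s = k, ascending_wave s,
     all (fun x => a <= x < a + M) s, monoc f s & lg s <= Delta M k r].
Proof.
case: M => // M' _ HG f a Hf.
have Hi : forall i : 'I_M'.+1, f (a + i) < r.
  by move=> i; apply: Hf; rewrite leq_addr ltn_add2l ltn_ord.
pose psi : coloring M'.+1 r := [ffun i => Ordinal (Hi i)].
have Hrel : forall i, val (psi i) = f (a + i) by move=> i; rewrite ffunE.
have [s0 [H1 H2 H3 H4]] := HG f a Hf.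
have [t0 [Ht0 _]] := seq_to_tuple _ _ _ _ _ _ Hrel _ H1 H2 H3 H4.
have [t [Ht Hlt]] := attain _ _ _ _ _ Ht0.
have [s [S1 S2 S3 S4 S5]] := tuple_to_seq _ _ _ _ _ _ Hrel _ Ht.
exists s; split=> //; rewrite S5; apply: leq_trans Hlt _.
by rewrite /Delta; apply: (leq_bigmax_cond psi).
Qed.

Lemma toDeltaB k r M B : 0 < M -> GoodB k r M B -> Delta M k r <= B.
Proof.
case: M => // M' _ HG; apply/bigmax_leqP => psi _.
pose f x := val (psi (inord x)).
have Hrel : forall i : 'I_M'.+1, val (psi i) = f (0 + i).
  by move=> i; rewrite /f add0n inord_val.
have [s [S1 S2 S3 S4 S5]] := HG f 0 (fun x _ => ltn_ord _).
have [t [Ht Hl]] := seq_to_tuple _ _ _ _ _ _ Hrel _ S1 S2 S3 S4.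
by apply: leq_trans (delta_le _ _ _ _ _ Ht) _; rewrite Hl.
Qed.

Lemma Delta_le M k r : Delta M k r <= M.
Proof.
apply/bigmax_leqP => psi _; rewrite /delta_k.
elim/big_ind: _ => //; last by move=> *; exact: last_gap_le.
by move=> x y Hx _; apply: leq_trans (geq_minl _ _) Hx.
Qed.

Lemma lg_le_int s b L : all (fun x => b <= x < b + L) s -> lg s <= L.
Proof.
move=> /allP H; rewrite /lg; case: s H => [|y s] H //=.
have H1 := H _ (@mem_nth _ 0 (y :: s) (size s) (ltnSn _)).
have H2 : (size s).-1 < size (y :: s) by rewrite /=; lia.
have := H _ (mem_nth 0 H2); move: H1 => /=; lia.
Qed.

Lemma lg_pos s : sorted ltn s -> 2 <= size s -> 0 < lg s.
Proof.
move=> Hs Hz; rewrite /lg subn_gt0.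
apply: (sorted_ltn_nth ltn_trans 0 Hs); rewrite ?inE; lia.
Qed.

Lemma Good_of_GoodB k r L B : GoodB k r L B -> Good k r L.
Proof.
move=> H f a Hf; have [s [*]] := H f a Hf; by exists s.
Qed.

Lemma pos_of_good k r L : 1 <= k -> 1 <= r -> Good k r L -> 0 < L.
Proof.
move=> Hk Hr HG; have [s [H1 _ /allP H3 _]] := HG (fun _ => 0) 0 (fun _ _ => Hr).
case: s H1 H3 => [|y s] /= H1 H3; first by rewrite -H1 in Hk.
by have := H3 y; rewrite inE eqxx => /(_ isT); lia.
Qed.

Lemma lg_rcons s y : 0 < size s -> lg (rcons s y) = y - last 0 s.
Proof.
case: s => [|z s] // _; rewrite /lg size_rcons /= nth_rcons /= ltnn eqxx.
rewrite (last_nth 0) /=; case E: (size s) => [|n] //=; rewrite nth_rcons /=.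
by rewrite E ltnSn.
Qed.

Lemma step k r M1 M2 : 2 <= k -> 1 <= r -> 0 < M1 -> 0 < M2 ->
  Good k r.+1 M1 -> Good k.+1 r M2 ->
  GoodB k.+1 r.+1 (M1 + Delta M1 k r.+1 + M2 - 1) (Delta M1 k r.+1 + M2).
Proof.
move=> Hk Hr HM1 HM2 G1 G2 f a Hf.
have Hf1 : forall x, a <= x < a + M1 -> f x < r.+1 by move=> x Hx; apply: Hf; lia.
have [s [S1 S2 S3 S4 S5]] := fromDelta _ _ _ HM1 G1 f a Hf1.
have Hxs : last 0 s \in s.
  clear S2 S3 S4 S5; case: s S1 => [|y s] Hs; last exact: mem_last.
  by rewrite -Hs in Hk.
have Hxi := allP S3 _ Hxs; move: Hxi => /= Hxi.
have Hg : 0 < lg s by apply: lg_pos; [case/awP: S2|lia].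
move: Hxs Hxi Hg S5; set x := last 0 s; set g := lg s => Hxs Hxi Hg S5.
case: (boolP (has (fun y => f y == f x) (iota (x + g) M2))).
- case/hasP => y; rewrite mem_iota => Hy /eqP Hfy.
  exists (rcons s y); split.
  + by rewrite size_rcons S1.
  + apply: aw_rcons => //; rewrite -/x -/g; lia.
  + rewrite all_rcons; apply/andP; split; first lia.
    by apply: sub_all S3 => z /=; lia.
  + move=> u v; rewrite !mem_rcons !inE => /orP[/eqP->|Hu] /orP[/eqP->|Hv] //.
    * by rewrite Hfy (S4 _ _ Hxs Hv).
    * by rewrite Hfy (S4 _ _ Hu Hxs).
    * exact: S4.
  + rewrite lg_rcons; last lia. rewrite -/x; lia.
- move/hasPn => Hno.
  pose f' z := if f z < f x then f z else (f z).-1.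
  have Hfx := Hf1 x Hxi.
  have Hf' : forall z, x + g <= z < x + g + M2 -> f' z < r.
    move=> z Hz; have := Hno z; rewrite mem_iota Hz => /(_ isT) /eqP Hne.
    have : f z < r.+1 by apply: Hf; lia.
    rewrite /f'; case: (ltnP (f z) (f x)); lia.
  have [s' [T1 T2 T3 T4]] := G2 f' (x + g) Hf'.
  exists s'; split=> //.
  + by apply: sub_all T3 => z /=; lia.
  + move=> u v Hu Hv; have := T4 u v Hu Hv.
    have Hu' := allP T3 u Hu; have Hv' := allP T3 v Hv.
    have := Hno u; rewrite mem_iota Hu' => /(_ isT) /eqP Nu.
    have := Hno v; rewrite mem_iota Hv' => /(_ isT) /eqP Nv.
    rewrite /f'; case: (ltnP (f u) (f x)); case: (ltnP (f v) (f x)); lia.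
  + by apply: leq_trans (lg_le_int _ _ _ T3) _; lia.
Qed.

Lemma MkrS k r : 2 <= k -> 1 <= r ->
  Mkr k.+1 r.+1 = Mkr k r.+1 + Delta (Mkr k r.+1) k r.+1 + Mkr k.+1 r - 1.
Proof. by case: k => [|[|k]] // _; case: r. Qed.

Lemma Mk1 k : 1 <= k -> Mkr k 1 = k.
Proof. by case: k => [|[|[|k]]]. Qed.

Lemma M2r r : Mkr 2 r = r.+1.
Proof. by []. Qed.

Lemma goodM r : 1 <= r -> forall k, 1 <= k -> Good k r (Mkr k r).
Proof.
elim: r => // r IHr _ k; elim: k => // k IHk _.
case: k IHk => [|[|k]] IHk.
- exact: good1.
- exact: good2.
case: r IHr IHk => [|r] IHr IHk.
- rewrite Mk1 //; exact: goodk1.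
rewrite MkrS //.
have G1 := IHk isT.
have G2 := IHr isT k.+3 isT.
apply: Good_of_GoodB; apply: step => //.
- exact: pos_of_good G1.
- exact: pos_of_good G2.
Qed.

Lemma DeltaS k r : 2 <= k -> 1 <= r ->
  Delta (Mkr k.+1 r.+1) k.+1 r.+1 <= Delta (Mkr k r.+1) k r.+1 + Mkr k.+1 r.
Proof.
move=> Hk Hr.
have G1 := goodM r.+1 isT k (ltnW Hk).
have G2 := goodM r Hr k.+1 isT.
have P1 := pos_of_good _ r.+1 _ (ltnW Hk) isT G1.
have P2 := pos_of_good k.+1 _ _ isT Hr G2.
apply: toDeltaB; first by rewrite MkrS //; lia.
rewrite MkrS //; exact: step.
Qed.

Lemma bS n m : 'C(n + 1, m + 1) = 'C(n, m + 1) + 'C(n, m).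
Proof. by rewrite !addn1 binS. Qed.

Lemma bounds q :
  (forall k, 2 <= k -> Mkr k q.+1 <= 'C(k + 2*q, 2*q + 1)) ->
  forall k, 2 <= k -> Mkr k q.+2 <= 'C(k + 2*q + 2, 2*q + 3) /\
     Delta (Mkr k q.+2) k q.+2 <= 'C(k + 2*q + 1, 2*q + 2).
Proof.
move=> IH; elim=> // k IHk Hk.
case: (ltnP k 2) => Hk2.
- have -> : k = 1 by lia.
  have E1 : 'C(1 + 1 + 2 * q + 2, 2 * q + 3) = 2 * q + 4.
    by rewrite (_ : 1 + 1 + 2 * q + 2 = (2*q+3).+1) ?binSn; lia.
  have E2 : 'C(1 + 1 + 2 * q + 1, 2 * q + 2) = 2 * q + 3.
    by rewrite (_ : 1 + 1 + 2 * q + 1 = (2*q+2).+1) ?binSn; lia.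
  rewrite E1 E2 M2r; split; first lia.
  apply: leq_trans (Delta_le _ _ _) _; lia.
have [Hm Hd] := IHk Hk2.
have Hm1 := IH k.+1 Hk.
have HD := DeltaS k q.+1 Hk2 isT.
have E3 : 'C(k + 2 * q + 2, 2 * q + 2) =
  'C(k + 2 * q + 1, 2 * q + 2) + 'C(k.+1 + 2 * q, 2 * q + 1).
  rewrite (_ : k + 2 * q + 2 = (k + 2 * q + 1) + 1); last lia.
  rewrite (_ : 2 * q + 2 = (2 * q + 1) + 1); last lia.
  rewrite bS; congr (_ + _); congr 'C(_, _); lia.
have E2 : 'C(k.+1 + 2 * q + 1, 2 * q + 2) =
  'C(k + 2 * q + 1, 2 * q + 2) + 'C(k.+1 + 2 * q, 2 * q + 1).
  by rewrite -E3; congr 'C(_, _); lia.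
have E1 : 'C(k.+1 + 2 * q + 2, 2 * q + 3) =
  'C(k + 2 * q + 2, 2 * q + 3) + 'C(k + 2 * q + 1, 2 * q + 2) + 'C(k.+1 + 2 * q, 2 * q + 1).
  rewrite -[RHS]addnA -E3.
  rewrite (_ : k.+1 + 2 * q + 2 = (k + 2 * q + 2) + 1); last lia.
  rewrite (_ : 2 * q + 3 = (2 * q + 2) + 1); last lia.
  by rewrite bS.
rewrite E1 E2; split; last lia.
rewrite MkrS //; lia.
Qed.

Lemma Mbound q : forall k, 2 <= k -> Mkr k q.+1 <= 'C(k + 2*q, 2*q + 1).
Proof.
elim: q => [|q IH] k Hk.
- by rewrite Mk1 ?muln0 ?addn0 ?bin1 //; lia.
- have [H _] := bounds q IH k Hk.
  apply: leq_trans H _; rewrite (_ : k + 2 * q.+1 = k + 2 * q + 2); last lia.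
  by rewrite (_ : 2 * q.+1 + 1 = 2 * q + 3); last lia.
Qed.

Import Order.TTheory GRing.Theory Num.Theory.
Local Open Scope ring_scope.

Lemma prodX (R : realFieldType) n : exists q : {poly R},
  \prod_(i < n) ('X + (i%:R)%:P) = 'X^n + q /\ (size q <= n)%N.
Proof.
elim: n => [|n [q [Hq Hs]]].
  by exists 0; rewrite big_ord0 expr0 addr0 size_poly0.
exists ('X^n * (n%:R)%:P + q * 'X + q * (n%:R)%:P); split.
  rewrite big_ord_recr /= Hq exprSr; ring.
have H1 : (size (('X^n * (n%:R : R)%:P)%R) <= n.+1)%N.
  apply: leq_trans (size_polyMleq _ _) _; rewrite size_polyXn.
  have := size_polyC_leq1 (n%:R : R); lia.
have H2 : (size ((q * 'X)%R) <= n.+1)%N.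
  apply: leq_trans (size_polyMleq _ _) _; rewrite size_polyX; lia.
have H3 : (size ((q * (n%:R : R)%:P)%R) <= n.+1)%N.
  apply: leq_trans (size_polyMleq _ _) _.
  have := size_polyC_leq1 (n%:R : R); lia.
apply: leq_trans (size_polyD _ _) _; rewrite geq_max H3 andbT.
apply: leq_trans (size_polyD _ _) _; by rewrite geq_max H1 H2.
Qed.

Lemma prod_ffact k n : (\prod_(i < n) (k + i) = (k + n).-1 ^_ n)%N.
Proof.
elim: n => [|n IH]; first by rewrite big_ord0 ffactn0.
rewrite big_ord_recr /= IH.
rewrite (_ : (k + n.+1).-1 = k + n)%N; last lia.
rewrite ffactnS mulnC; congr (_ * _)%N.
Qed.

Theorem lemma1p4 (R : realFieldType) (r : nat) : (1 <= r)%N ->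
  exists p : {poly R},
    (size p <= (2 * r - 2).+1)%N /\
    forall k : nat, (3 <= k)%N ->
      (Mkr k r)%:R <= (k%:R) ^+ (2 * r - 1) / ((2 * r - 1)`!)%:R + p.[k%:R].
Proof.
case: r => // q _.
have En : (2 * q.+1 - 1 = 2 * q + 1)%N by lia.
have Es : ((2 * q.+1 - 2).+1 = 2 * q + 1)%N by lia.
rewrite En Es; set n := (2 * q + 1)%N.
have [Q [HQ HS]] := prodX R n.
exists ((n`!%:R : R)^-1 *: Q); split.
  exact: leq_trans (size_scale_leq _ _) HS.
move=> k Hk.
have HM := Mbound q k (ltnW Hk).
have Hf : (n`!%:R : R) != 0 by rewrite pnatr_eq0 -lt0n fact_gt0.
have EC : ('C(k + 2 * q, n)%:R : R) = (k%:R ^+ n + Q.[k%:R]) / n`!%:R.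
  apply: (mulIf Hf); rewrite mulfVK // -natrM bin_ffact.
  rewrite (_ : k + 2 * q = (k + n).-1)%N; last by rewrite /n; lia.
  rewrite -prod_ffact natr_prod -hornerXn -hornerD -HQ horner_prod.
  by apply: eq_bigr => i _; rewrite hornerD hornerX hornerC natrD.
rewrite hornerZ mulrDl [_^-1 * _]mulrC in EC *.
by rewrite -EC ler_nat.
Qed.
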